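(* Let $\sigma:\mathbb R\to\mathbb R$ be a differentiable activation, $L\geq2$, and let $\mathrm{NN}'(\{m'_l\}_{l=0}^L)$ be a fully-connected network with $M_{\mathrm{wide}}$ parameters that is wider than a fully-connected network $\mathrm{NN}(\{m_l\}_{l=0}^L)$ with $M_{\mathrm{narr}}$ parameters (both with $m_L=m'_L=1$). Then for every function $f^*$ in the function space $\mathcal F_{\mathrm{narr}}$ of the narrower network, $O_{f_{\theta_{\mathrm{wide}}}}(f^* )\leq O_{f_{\theta_{\mathrm{narr}}}}(f^* )\leq M_{\mathrm{narr}}$, where $f_{\theta_{\mathrm{wide}}}$, $f_{\theta_{\mathrm{narr}}}$ denote the wider and the narrower network models.
   Context: A fully-connected network $\mathrm{NN}(\{m_l\}_{l=0}^L)$ with input dimension $m_0=d$ and output dimension $m_L=1$ has parameters $\theta=(W^{[1]},b^{[1]},\dots,W^{[L]},b^{[L]})$ with $W^{[l]}\in\mathbb R^{m_l\times m_{l-1}}$, $b^{[l]}\in\mathbb R^{m_l}$ (identified with a vector in $\mathbb R^M$, $M=\sum_{l=0}^{L-1}(m_l+1)m_{l+1}$), and output $f_\theta(x)=W^{[L]}f^{[L-1]}(x)+b^{[L]}$, where $f^{[0]}(x)=x$ and $f^{[l]}(x)=\sigma(W^{[l]}f^{[l-1]}(x)+b^{[l]})$ for $l\in[L-1]$ ($\sigma$ applied entrywise). Its function space is $\{f_\theta:\theta\in\mathbb R^M\}$. $\mathrm{NN}'(\{m'_l\}_{l=0}^L)$ is wider than $\mathrm{NN}(\{m_l\}_{l=0}^L)$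 if $m'_0=m_0$, $m'_L=m_L$, $m'_l\geq m_l$ for all $l\in[L-1]$, and $\sum_{l=1}^{L-1}(m'_l-m_l)>0$. The loss $\ell:\mathbb R\times\mathbb R\to[0,\infty)$ is continuously differentiable with $\ell(u,v)=0$ iff $u=v$. For a model $h_\theta$ with parameters in $\mathbb R^M$ and $f^*$ in its function space: the target set is $\mathcal M_{f^*}=\{\theta:h_\theta=f^*\}$; a dataset of size $n$ from $f^*$ is $\{(x_i,f^*(x_i))\}_{i=1}^n$ with empirical loss $\frac1n\sum_i\ell(u(x_i),f^*(x_i))$ for a function $u$ (identically $0$ if $n=0$); the tangent hyperplane at $\theta'$ is $\{h(\cdot;\theta')+a^\top\nabla_\theta h(\cdot;\theta'):a\in\mathbb R^M\}$; $f^*$ has $n$-sample LLR-guarantee if there exist a dataset of size $n$ from $f^*$ and $\theta'\in\mathcal M_{f^*}$ such that the set of minimizers of the empirical loss over the tangent hyperplane at $\theta'$ is exactly $\{f^*\}$; the optimistic sample size $O_h(f^* )$ is the smallest $n\geq0$ for which $f^*$ has $n$-sample LLR-guarantee. *)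

(* Defs.v *)
From HB Require Import structures.
From mathcomp Require Import all_boot all_order all_algebra.
From mathcomp Require Import all_classical all_reals all_analysis.
Set Implicit Arguments. Unset Strict Implicit. Unset Printing Implicit Defensive.
Import Order.TTheory GRing.Theory Num.Theory.
Import numFieldNormedType.Exports.
Local Open Scope ring_scope.

Section Defs.
Variable R : realType.

Definition loss_ok (loss : R -> R -> R) : Prop :=
  let lossU := fun z : R * R => loss z.1 z.2 in
  [/\ forall z : R * R, differentiable lossU z,
      continuous (fun z : R * R => 'D_(1, 0) lossU z),
      continuous (fun z : R * R => 'D_(0, 1) lossU z),
      (forall u v, 0 <= loss u v) &
      (forall u v, loss u v = 0 <-> u = v)].

(** Generic model h : R^P -> (R^d -> R) with a finite parameter index type P
    (so the parameter space is R^M with M = #|P|). *)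
Section Model.
Variables (d : nat) (P : finType).
Let Inp := 'I_d -> R.
Variable h : (P -> R) -> Inp -> R.

Definition partial (th : P -> R) (p : P) (x : Inp) : R :=
  derive1 (fun t : R => h (fun q => th q + (if q == p then t else 0)) x) 0.

Definition tangent (th' : P -> R) : set (Inp -> R) :=
  [set u | exists a : P -> R,
     u = fun x => h th' x + \sum_(p : P) a p * partial th' p x].

Definition target_set (fstar : Inp -> R) : set (P -> R) :=
  [set th | h th = fstar].

Definition emp_loss (loss : R -> R -> R) (fstar : Inp -> R) (n : nat)
  (xs : 'I_n -> Inp) (u : Inp -> R) : R :=
  if n == 0%N then 0
  else n%:R^-1 * \sum_(i < n) loss (u (xs i)) (fstar (xs i)).

Definition LLR_guarantee (loss : R -> R -> R) (fstar : Inp -> R) (n : nat) : Prop :=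
  exists (xs : 'I_n -> Inp) (th' : P -> R), target_set fstar th' /\
    forall u : Inp -> R,
      (tangent th' u /\ forall v, tangent th' v ->
          emp_loss loss fstar xs u <= emp_loss loss fstar xs v)
      <-> u = fstar.

Definition is_optimistic_size (loss : R -> R -> R) (fstar : Inp -> R) (n : nat) : Prop :=
  LLR_guarantee loss fstar n /\ forall k, (k < n)%N -> ~ LLR_guarantee loss fstar k.

End Model.

(** Fully-connected networks with widths m 0 = d, m 1, ..., m L = 1.
    Parameter index: a layer l < L (i.e. W^[l+1], b^[l+1]), a row i < m (l+1),
    and a column j <= m l, where column j = m l is the bias entry b^[l+1]_i. *)
Definition nn_param (L : nat) (m : nat -> nat) : finType :=
  {l : 'I_L & ('I_(m l.+1) * 'I_(m l).+1)%type}.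

Definition nn_num_params (L : nat) (m : nat -> nat) : nat :=
  (\sum_(l < L) (m l + 1) * m l.+1)%N.

Section Network.
Variables (sigma : R -> R) (d L : nat) (m : nat -> nat).

(** entry (i,j) of [W^[l+1] | b^[l+1]] as a function of nat indices (0 outside range) *)
Definition nn_entry (th : nn_param L m -> R) (l i j : nat) : R :=
  match @insub _ (fun k => (k < L)%N) 'I_L l with
  | Some lo =>
    match @insub _ (fun k => (k < m lo.+1)%N) 'I_(m lo.+1) i,
          @insub _ (fun k => (k < (m lo).+1)%N) 'I_(m lo).+1 j with
    | Some io, Some jo => th (Tagged (fun l0 : 'I_L => ('I_(m l0.+1) * 'I_(m l0).+1)%type) (io, jo))
    | _, _ => 0
    end
  | None => 0
  end.

Definition nn_input (x : 'I_d -> R) (j : nat) : R :=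
  match @insub _ (fun k => (k < d)%N) 'I_d j with Some jo => x jo | None => 0 end.

Definition nn_pre (th : nn_param L m -> R) (l : nat) (a : nat -> R) (i : nat) : R :=
  \sum_(j < m l) nn_entry th l i j * a j + nn_entry th l i (m l).

Fixpoint nn_hidden (th : nn_param L m -> R) (x : 'I_d -> R) (l : nat) : nat -> R :=
  match l with
  | 0 => nn_input x
  | l'.+1 => fun i => sigma (nn_pre th l' (nn_hidden th x l') i)
  end.

Definition nn_model (th : nn_param L m -> R) (x : 'I_d -> R) : R :=
  nn_pre th L.-1 (nn_hidden th x L.-1) 0.

Definition nn_function_space : set (('I_d -> R) -> R) :=
  [set f | exists th, nn_model th = f].

End Network.

Definition nn_arch (d L : nat) (m : nat -> nat) : Prop :=
  [/\ m 0%N = d, m L = 1%N & forall l, (l <= L)%N -> (0 < m l)%N].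

Definition wider (L : nat) (m' m : nat -> nat) : Prop :=
  [/\ m' 0%N = m 0%N, m' L = m L,
      (forall l, (1 <= l <= L.-1)%N -> (m l <= m' l)%N) &
      (0 < \sum_(1 <= l < L) (m' l - m l))%N].

End Defs.

Arguments nn_model {R} sigma d L m th x.
Arguments nn_function_space {R} sigma d L m _.
Arguments is_optimistic_size {R d P} h loss fstar n.

(* Main.v *)
Require Import Defs.
From HB Require Import structures.
From mathcomp Require Import all_boot all_order all_algebra.
From mathcomp Require Import all_classical all_reals all_analysis.
Set Implicit Arguments. Unset Strict Implicit. Unset Printing Implicit Defensive.
Import Order.TTheory GRing.Theory Num.Theory.
Local Open Scope ring_scope.

Lemma opt_exists (Q : nat -> Prop) n0 : Q n0 ->
  exists n, [/\ Q n, (forall k, (k < n)%N -> ~ Q k) & (n <= n0)%N].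
Proof.
elim/ltn_ind: n0 => n0 IH Qn0.
have [[k [Hk Qk]]|H] := pselect (exists k, (k < n0)%N /\ Q k).
  have [n [Qn Hn Hle]] := IH k Hk Qk.
  by exists n; split => //; apply: leq_trans Hle (ltnW Hk).
exists n0; split => // k Hk Qk; apply: H; by exists k.
Qed.

Section Interp.
Variables (R : realType) (X : Type).

Lemma interp_ord (k : nat) (phi : 'I_k -> X -> R) :
  exists n (xs : 'I_n -> X), (n <= k)%N /\
  forall a : 'I_k -> R, (forall i, \sum_p a p * phi p (xs i) = 0) ->
    forall x, \sum_p a p * phi p x = 0.
Proof.
pose A n (xs : 'I_n -> X) : 'M[R]_(n, k) := \matrix_(i, p) phi p (xs i).
pose good n := `[< exists xs : 'I_n -> X, \rank (A n xs) = n >].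
have good0 : good 0%N.
  apply/asboolP; exists (fun i : 'I_0 => False_rect X (notF (ltn_ord i))).
  apply/eqP; rewrite -leqn0; exact: rank_leq_row.
have goodb n : good n -> (n <= k)%N.
  by move=> /asboolP[xs <-]; apply: rank_leq_col.
have exP : exists n, good n by exists 0%N.
case: (ex_maxnP exP goodb) => n /asboolP[xs Hr] Hmax.
exists n, xs; split; first by apply: goodb; apply/asboolP; exists xs.
have Hsub : forall x, (\row_p phi p x <= A n xs)%MS.
  move=> x; apply/negPn/negP => Hn.
  pose xs' (i : 'I_(n + 1)) := match fintype.split i with inl i' => xs i' | inr _ => x end.
  have EA : A _ xs' = col_mx (A n xs) (\row_p phi p x).
    apply/matrixP => i j; rewrite !mxE /xs'.
    by case: splitP => [i' _|i' _]; rewrite !mxE.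
  have : good (n + 1)%N.
    apply/asboolP; exists xs'; rewrite EA.
    apply/eqP; rewrite eqn_leq rank_leq_row /=.
    rewrite -addsmxE addn1.
    rewrite -{1}Hr; apply: rank_ltmx; rewrite ltmxE addsmxSl /=.
    apply/negP => Hs; move/negP: Hn; apply; apply: submx_trans Hs; exact: addsmxSr.
  by move=> /Hmax; rewrite addn1 ltnn.
move=> a Ha x.
have [D HD] := submxP (Hsub x).
have H0 : A n xs *m (\col_p a p) = 0.
  apply/matrixP => i j; rewrite !mxE.
  transitivity (\sum_p a p * phi p (xs i)); last exact: Ha i.
  by apply: eq_bigr => p _; rewrite !mxE mulrC.
have E := congr1 (mulmx ^~ (\col_p a p)) HD.
have := congr1 (fun M : 'M[R]_1 => M ord0 ord0) E.
rewrite -mulmxA H0 mulmx0 !mxE => E0; rewrite -[RHS]E0.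
by apply: eq_bigr => p _; rewrite !mxE mulrC.
Qed.

Lemma interp (P : finType) (phi : P -> X -> R) :
  exists n (xs : 'I_n -> X), (n <= #|P|)%N /\
  forall a : P -> R, (forall i, \sum_p a p * phi p (xs i) = 0) ->
    forall x, \sum_p a p * phi p x = 0.
Proof.
have [n [xs [Hn H]]] := interp_ord (fun i : 'I_#|P| => phi (enum_val i)).
exists n, xs; split => // a Ha x.
have := H (fun i => a (enum_val i)) _ x.
rewrite -(big_enum_val (A := P) (fun p => a p * phi p x)) => -> //.
move=> i; have := Ha i; by rewrite (big_enum_val (A := P) (fun p => a p * phi p (xs i))).
Qed.
End Interp.

Section LLR.
Variables (R : realType) (d : nat) (P : finType).
Variable h : (P -> R) -> ('I_d -> R) -> R.
Variables (loss : R -> R -> R) (fstar : ('I_d -> R) -> R).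
Hypothesis loss_ge0 : forall u v, 0 <= loss u v.
Hypothesis loss_eq0 : forall u v, loss u v = 0 <-> u = v.

Lemma emp_loss_ge0 n (xs : 'I_n -> 'I_d -> R) u : 0 <= emp_loss loss fstar xs u.
Proof.
rewrite /emp_loss; case: ifP => // _.
by apply: mulr_ge0; [rewrite invr_ge0 ler0n | apply: sumr_ge0 => i _].
Qed.

Lemma emp_loss_fstar n (xs : 'I_n -> 'I_d -> R) : emp_loss loss fstar xs fstar = 0.
Proof.
rewrite /emp_loss; case: ifP => // _.
by rewrite big1 ?mulr0 // => i _; apply/loss_eq0.
Qed.

Lemma interp_LLR (th' : P -> R) n (xs : 'I_n -> 'I_d -> R) :
  h th' = fstar ->
  (forall a : P -> R, (forall i, \sum_p a p * partial h th' p (xs i) = 0) ->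
    forall x, \sum_p a p * partial h th' p x = 0) ->
  LLR_guarantee h loss fstar n.
Proof.
move=> Hth H; exists xs, th'; split => // u; split.
- move=> [[a Ha] Hmin].
  have Hle : emp_loss loss fstar xs u <= 0.
    rewrite -(emp_loss_fstar xs); apply: Hmin.
    exists (fun _ => 0); apply/funext => x.
    by rewrite big1 ?addr0 ?Hth // => p _; rewrite mul0r.
  have Hz : forall i, \sum_p a p * partial h th' p (xs i) = 0.
    move=> i.
    have Hn : n != 0%N by rewrite -lt0n; exact: leq_ltn_trans (leq0n i) (ltn_ord i).
    have Hs : \sum_(i < n) loss (u (xs i)) (fstar (xs i)) = 0.
      apply/eqP; rewrite eq_le sumr_ge0 // andbT.
      move: Hle; rewrite /emp_loss (negbTE Hn).
      by rewrite pmulr_rle0 // invr_gt0 ltr0n lt0n.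
    have := psumr_eq0P (fun j _ => loss_ge0 _ _) Hs (i := i) isT.
    move/loss_eq0; rewrite Ha -Hth => /eqP.
    by rewrite addrC -subr_eq0 addrK => /eqP.
  by apply/funext => x; rewrite Ha (H a Hz x) addr0 Hth.
- move=> ->; split.
    exists (fun _ => 0); apply/funext => x.
    by rewrite big1 ?addr0 ?Hth // => p _; rewrite mul0r.
  by move=> v _; rewrite emp_loss_fstar emp_loss_ge0.
Qed.

Lemma LLR_exists (th' : P -> R) : h th' = fstar ->
  exists n, (n <= #|P|)%N /\ LLR_guarantee h loss fstar n.
Proof.
move=> Hth; have [n [xs [Hn H]]] := interp (partial h th').
by exists n; split => //; apply: interp_LLR H.
Qed.

End LLR.

Section Transfer.
Variables (R : realType) (d : nat) (P1 P2 : finType).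
Variable h1 : (P1 -> R) -> ('I_d -> R) -> R.
Variable h2 : (P2 -> R) -> ('I_d -> R) -> R.

Lemma tangent_transfer th1 th2 (g : P2 -> option P1) (e : P1 -> P2) :
  h2 th2 = h1 th1 ->
  (forall q x, partial h2 th2 q x =
     match g q with Some p => partial h1 th1 p x | None => 0 end) ->
  (forall p, g (e p) = Some p) ->
  tangent h2 th2 = tangent h1 th1.
Proof.
move=> Hh Hp Hge; apply/seteqP; split => u [a ->].
- exists (fun p => \sum_(q | g q == Some p) a q); apply/funext => x.
  rewrite Hh; congr (_ + _).
  under [RHS]eq_bigr => p _ do rewrite mulr_suml big_mkcond.
  rewrite exchange_big /=; apply: eq_bigr => q _; rewrite Hp.
  case: (g q) => [p0|].
    rewrite (bigD1 p0) //= eqxx big1 ?addr0 // => p Hne.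
    by case: eqP => // -[] E; rewrite E eqxx in Hne.
  by rewrite mulr0 big1.
- exists (fun q => \sum_(p | e p == q) a p); apply/funext => x.
  rewrite Hh /=; congr (_ + _); apply/esym.
  under eq_bigr => q _ do rewrite mulr_suml big_mkcond.
  rewrite exchange_big /=; apply: eq_bigr => p _.
  rewrite (bigD1 (e p)) //= eqxx big1 ?addr0; first by rewrite Hp Hge.
  by move=> q Hne; case: eqP => // E; rewrite E eqxx in Hne.
Qed.

Lemma LLR_transfer loss fstar n :
  (forall th1, h1 th1 = fstar -> exists th2, h2 th2 = fstar /\ tangent h2 th2 = tangent h1 th1) ->
  LLR_guarantee h1 loss fstar n -> LLR_guarantee h2 loss fstar n.
Proof.
move=> HT [xs [th1 [Ht1 H]]].
have [th2 [Ht2 Etan]] := HT th1 Ht1.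
by exists xs, th2; split => //; rewrite Etan.
Qed.
End Transfer.

Section Entry.
Variables (R : realType) (L : nat) (mm : nat -> nat).
Local Notation P := (nn_param L mm).

Definition idx (l i j : nat) : option P :=
  match @insub _ (fun k => (k < L)%N) 'I_L l with
  | Some lo =>
    match @insub _ (fun k => (k < mm lo.+1)%N) 'I_(mm lo.+1) i,
          @insub _ (fun k => (k < (mm lo).+1)%N) 'I_(mm lo).+1 j with
    | Some io, Some jo => Some (Tagged (fun l0 : 'I_L => ('I_(mm l0.+1) * 'I_(mm l0).+1)%type) (io, jo))
    | _, _ => None
    end
  | None => None
  end.

Definition trip (q : P) : nat * nat * nat :=
  ((tag q : nat), ((tagged q).1 : nat), ((tagged q).2 : nat)).

Lemma nn_entry_idx (th : P -> R) l i j : nn_entry th l i j = oapp th 0 (idx l i j).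
Proof.
rewrite /nn_entry /idx; case: (insub l) => [lo|] //.
by case: (@insub _ (fun k => (k < mm lo.+1)%N) 'I_(mm lo.+1) i) => [io|];
  case: (@insub _ (fun k => (k < (mm lo).+1)%N) 'I_(mm lo).+1 j) => [jo|].
Qed.

Lemma idx_trip q : idx (trip q).1.1 (trip q).1.2 (trip q).2 = Some q.
Proof.
case: q => lo [io jo]; rewrite /idx /trip /=.
by rewrite valK valK valK.
Qed.

Lemma idx_some l i j q : idx l i j = Some q -> trip q = (l, i, j).
Proof.
rewrite /idx; case: insubP => [lo _ Elo|] //.
case: insubP => [io _ Eio|]; last by case: (@insub _ (fun k => (k < (mm lo).+1)%N) 'I_(mm lo).+1 j).
case: insubP => [jo _ Ejo|] // [<-].
by rewrite /trip /=; congr (_, _, _).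
Qed.

Lemma idx_in l i j : (l < L)%N -> (i < mm l.+1)%N -> (j <= mm l)%N -> exists q, idx l i j = Some q.
Proof.
move=> Hl Hi Hj.
exists (Tagged (fun l0 : 'I_L => ('I_(mm l0.+1) * 'I_(mm l0).+1)%type)
   (Ordinal (Hi : (i < mm (Ordinal Hl).+1)%N), Ordinal (Hj : (j < (mm (Ordinal Hl)).+1)%N))).
exact: (idx_trip (Tagged (fun l0 : 'I_L => ('I_(mm l0.+1) * 'I_(mm l0).+1)%type)
   (Ordinal (Hi : (i < mm (Ordinal Hl).+1)%N), Ordinal (Hj : (j < (mm (Ordinal Hl)).+1)%N)))).
Qed.

Lemma idx_eq l i j p : (idx l i j == Some p) = (trip p == (l, i, j)).
Proof.
case E: (idx l i j) => [q|].
  apply/eqP/eqP => [[<-]|Hp]; first exact: idx_some.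
  by rewrite -E; have := idx_trip p; rewrite Hp /= => ->.
apply/esym/negbTE/eqP => Hp; have := idx_trip p; by rewrite Hp /= E.
Qed.

Lemma nn_entry_pert (th : P -> R) p t l i j :
  nn_entry (fun q => th q + (if q == p then t else 0)) l i j =
  nn_entry th l i j + (if trip p == (l, i, j) then t else 0).
Proof.
rewrite !nn_entry_idx -idx_eq; case: (idx l i j) => [q|] /=; last by rewrite addr0.
by [].
Qed.

Lemma nn_entry_fun (F : nat -> nat -> nat -> R) l i j :
  (l < L)%N -> (i < mm l.+1)%N -> (j <= mm l)%N ->
  nn_entry (fun q => F (trip q).1.1 (trip q).1.2 (trip q).2) l i j = F l i j.
Proof.
move=> Hl Hi Hj; have [q Hq] := idx_in Hl Hi Hj.
rewrite nn_entry_idx Hq; have E := idx_some Hq; by rewrite /oapp E.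
Qed.

Definition ext (k : nat) (a : nat -> R) (j : nat) : R := if (j < mm k)%N then a j else 1.

Lemma nn_pre_ext (th : P -> R) k a i :
  nn_pre th k a i = \sum_(j < (mm k).+1) nn_entry th k i j * ext k a j.
Proof.
rewrite /nn_pre big_ord_recr /= /ext ltnn mulr1; congr (_ + _).
by apply: eq_bigr => j _; rewrite /= ltn_ord.
Qed.

Lemma nn_pre_pert (th : P -> R) p t k a i :
  nn_pre (fun q => th q + (if q == p then t else 0)) k a i =
  nn_pre th k a i +
  (if (k == (trip p).1.1) && (i == (trip p).1.2) then t * ext k a (trip p).2 else 0).
Proof.
rewrite !nn_pre_ext.
under eq_bigr => j _ do rewrite nn_entry_pert mulrDl.
rewrite big_split /=; congr (_ + _).
case: ifP => [/andP[/eqP Hk /eqP Hi]|Hn].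
  have Hj : ((trip p).2 < (mm k).+1)%N by rewrite Hk /trip /= ltn_ord.
  rewrite (bigD1 (Ordinal Hj)) //= big1 ?addr0.
    have Ep : trip p == (k, i, nat_of_ord (tagged p).2) by rewrite Hk Hi /trip /= eqxx.
    by rewrite Ep mulrC.
  move=> j Hne; case: ifP => [/eqP Ej|]; last by rewrite mul0r.
  have Ej2 := congr1 snd Ej; simpl in Ej2.
  move: Hne; have -> : j = Ordinal Hj by apply: val_inj; rewrite /= Ej2.
  by rewrite eqxx.
rewrite big1 // => j _; case: ifP => [/eqP Ej|]; last by rewrite mul0r.
have E1 := congr1 (fun z => z.1.1) Ej; have E2 := congr1 (fun z => z.1.2) Ej.
simpl in E1, E2; move: Hn => /negbT; rewrite negb_and /trip /= => /orP[] /eqP H; [by case: H | by case: H].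
Qed.

End Entry.

Lemma sum_trunc (R : realType) (n n' : nat) (G : nat -> R) : (n <= n')%N ->
  \sum_(j < n') (if (j < n)%N then G j else 0) = \sum_(j < n) G j.
Proof.
move=> H.
rewrite -(big_mkord xpredT (fun j => if (j < n)%N then G j else 0)) -(big_mkord xpredT G).
rewrite (big_cat_nat (leq0n n) H) /= [X in _ + X]big_nat_cond [X in _ + X]big1 ?addr0.
  by apply: eq_big_nat => j /andP[_ ->].
by move=> j /andP[/andP[Hj _] _]; rewrite ltnNge Hj.
Qed.

Section Net.
Variables (R : realType) (sigma : R -> R) (d L : nat) (m m' : nat -> nat).
Hypothesis Hm0 : m' 0%N = m 0%N.
Hypothesis HmL1 : m L = 1%N.
Hypothesis Hle : forall l, (l <= L)%N -> (m l <= m' l)%N.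
Hypothesis Hpos : forall l, (l <= L)%N -> (0 < m l)%N.
Hypothesis HL : (1 <= L)%N.

Local Notation P1 := (nn_param L m).
Local Notation P2 := (nn_param L m').

Definition Femb (th1 : P1 -> R) (l i j : nat) : R :=
  let i0 := if (i < m l.+1)%N then i else 0%N in
  if (j < m l)%N then nn_entry th1 l i0 j
  else if j == m' l then nn_entry th1 l i0 (m l) else 0.

Definition emb (th1 : P1 -> R) : P2 -> R :=
  fun q => Femb th1 (trip q).1.1 (trip q).1.2 (trip q).2.

Lemma pre_emb th1 k a2 a1 i : (k < L)%N -> (i < m' k.+1)%N ->
  (forall j, (j < m k)%N -> a2 j = a1 j) ->
  nn_pre (emb th1) k a2 i = nn_pre th1 k a1 (if (i < m k.+1)%N then i else 0%N).
Proof.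
move=> Hk Hi Ha; rewrite /nn_pre /emb.
have Hkk : (m k <= m' k)%N by apply: Hle; apply: ltnW.
have Hi' : (i < m' k.+1)%N by [].
under eq_bigr => j _ do rewrite nn_entry_fun // 1?ltnW // /Femb (ltn_eqF (ltn_ord j)).
rewrite nn_entry_fun // /Femb [(m' k < m k)%N]ltnNge Hkk /= eqxx; congr (_ + _).
transitivity (\sum_(j < m k) nn_entry th1 k (if (i < m k.+1)%N then i else 0%N) j * a2 j).
  rewrite -(sum_trunc (fun j => nn_entry th1 k (if (i < m k.+1)%N then i else 0%N) j * a2 j) Hkk).
  apply: eq_bigr => j _; case: ifP => //; by rewrite mul0r.
by apply: eq_bigr => j _; rewrite Ha.
Qed.

Lemma model_eq (T2 : P2 -> R) (T1 : P1 -> R) x kd :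
  (forall k a2 a1, (k < L)%N -> (forall j, (j < m k)%N -> a2 j = a1 j) ->
     (k == kd -> forall j, (m k <= j < m' k)%N -> a2 j = a1 0%N) ->
     forall i, (i < m k.+1)%N -> nn_pre T2 k a2 i = nn_pre T1 k a1 i) ->
  ((0 < kd)%N -> (kd < L)%N -> forall a2 a1, (forall j, (j < m kd.-1)%N -> a2 j = a1 j) ->
     forall i, (m kd <= i < m' kd)%N -> nn_pre T2 kd.-1 a2 i = nn_pre T1 kd.-1 a1 0%N) ->
  nn_model sigma d L m' T2 x = nn_model sigma d L m T1 x.
Proof.
move=> Hreal Hdup.
have Q : forall k, (k <= L.-1)%N ->
   (forall j, (j < m k)%N -> nn_hidden sigma T2 x k j = nn_hidden sigma T1 x k j) /\
   (k == kd -> forall j, (m k <= j < m' k)%N -> nn_hidden sigma T2 x k j = nn_hidden sigma T1 x k 0%N).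
  elim=> [_|k IH Hk].
    split => // _ j; rewrite Hm0 => /andP[H1 H2]; by rewrite ltnNge H1 in H2.
  have HkL : (k < L)%N by apply: leq_trans Hk _; rewrite leq_pred.
  have HkL' : (k.+1 < L)%N by rewrite -(prednK HL) ltnS.
  have [IHr IHd] := IH (ltnW Hk).
  split.
    by move=> j Hj /=; congr sigma; apply: Hreal.
  move=> /eqP Ekd j Hj /=; congr sigma.
  have := Hdup _ _ (nn_hidden sigma T2 x k) (nn_hidden sigma T1 x k) _ j; rewrite -Ekd /=.
  by apply => //.
have HL1 : (L.-1 < L)%N by rewrite prednK.
have [Qr Qd] := Q L.-1 (leqnn _).
rewrite /nn_model; apply: Hreal => //.
by rewrite prednK // HmL1.
Qed.

Lemma emb_model th1 : nn_model sigma d L m' (emb th1) = nn_model sigma d L m th1.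
Proof.
apply/funext => x; apply: (@model_eq _ _ x 0%N) => //.
move=> k a2 a1 Hk Hr _ i Hi; rewrite (@pre_emb _ _ _ a1) ?Hi //.
by apply: leq_trans Hi _; apply: Hle.
Qed.


Definition jn (l : 'I_L) (j : nat) : nat :=
  if (j < m l)%N then j else if j == m' l then m l else 0%N.

Lemma jn_le l j : (jn l j <= m l)%N.
Proof. rewrite /jn; case: ifP => [/ltnW //|_]; by case: ifP. Qed.

Definition gmap (q : P2) : option P1 :=
  match @insub _ (fun k => (k < m (tag q).+1)%N) 'I_(m (tag q).+1) (tagged q).1 with
  | Some io => Some (Tagged (fun l0 : 'I_L => ('I_(m l0.+1) * 'I_(m l0).+1)%type)
                      (io, inord (jn (tag q) (tagged q).2)))
  | None => None
  end.

Lemma pert_eq th1 (q : P2) t x :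
  nn_model sigma d L m' (fun q' => emb th1 q' + (if q' == q then t else 0)) x =
  match gmap q with
  | Some p => nn_model sigma d L m (fun p' => th1 p' + (if p' == p then t else 0)) x
  | None => nn_model sigma d L m th1 x
  end.
Proof.
case: q => ql [qi qj]; rewrite /gmap /=.
case: insubP => [io Hio Eio|Hn].
- apply: (@model_eq _ _ x ql).
  + move=> k a2 a1 Hk Hr Hd i Hi.
    rewrite !nn_pre_pert (@pre_emb _ _ _ a1) ?Hi //; last first.
      by apply: leq_trans Hi _; apply: Hle.
    congr (_ + _); rewrite /trip /= Eio.
    case: ifP => // /andP[/eqP Ek _]; congr (_ * _).
    have Hj := jn_le ql qj.
    rewrite inordK //.
    move: Hd Hr; rewrite Ek eqxx => Hd Hr.
    rewrite /ext /jn.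
    have Hqj : (qj <= m' ql)%N by rewrite -ltnS ltn_ord.
    case: (ltnP qj (m ql)) => Hq1.
      rewrite Hq1 (leq_trans Hq1) //; first exact: Hr.
      by apply: Hle; apply: ltnW.
    case: eqP => [->|Hne]; first by rewrite !ltnn.
    have Hq2 : (qj < m' ql)%N by rewrite ltn_neqAle Hqj andbT; apply/eqP.
    rewrite Hq2 (Hpos (ltnW (ltn_ord ql))); apply: Hd; by rewrite ?Hq1 ?Hq2.
  + move=> Hk _ a2 a1 Hr i Hi.
    have Hql : ql.-1 != ql by rewrite neq_ltn ltn_predL Hk.
    rewrite !nn_pre_pert /trip /= (negbTE Hql) /= !addr0.
    rewrite (@pre_emb _ _ _ a1) //; last first.
      by rewrite prednK //; case/andP: Hi.
      by apply: leq_ltn_trans (leq_pred _) (ltn_ord ql).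
    by rewrite prednK // ltnNge; case/andP: Hi => ->.
- apply: (@model_eq _ _ x 0%N) => //.
  move=> k a2 a1 Hk Hr _ i Hi.
  rewrite nn_pre_pert (@pre_emb _ _ _ a1) ?Hi //; last first.
    by apply: leq_trans Hi _; apply: Hle.
  rewrite /trip /=; case: ifP; last by rewrite addr0.
  case/andP => /eqP Ek /eqP Ei; move: Hn; rewrite -Ei.
  move: Hi; rewrite Ek => ->; by [].
Qed.

Lemma partial_emb th1 q x :
  partial (nn_model sigma d L m') (emb th1) q x =
  match gmap q with Some p => partial (nn_model sigma d L m) th1 p x | None => 0 end.
Proof.
rewrite /partial; case E: (gmap q) => [p|].
  have Hf : (fun t => nn_model sigma d L m' (fun q' => emb th1 q' + (if q' == q then t else 0)) x)
    = (fun t => nn_model sigma d L m (fun p' => th1 p' + (if p' == p then t else 0)) x).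
    by apply/funext => t; rewrite pert_eq E.
  by rewrite Hf.
have Hf : (fun t => nn_model sigma d L m' (fun q' => emb th1 q' + (if q' == q then t else 0)) x)
    = cst (nn_model sigma d L m th1 x).
  by apply/funext => t; rewrite pert_eq E.
by rewrite Hf derive1_cst.
Qed.

Lemma HleS (l : 'I_L) : (m l.+1 <= m' l.+1)%N.
Proof. exact: Hle (ltn_ord l). Qed.

Definition emap (p : P1) : P2 :=
  Tagged (fun l0 : 'I_L => ('I_(m' l0.+1) * 'I_(m' l0).+1)%type)
    (widen_ord (HleS (tag p)) (tagged p).1,
     inord (if ((tagged p).2 < m (tag p))%N then nat_of_ord (tagged p).2 else m' (tag p))).

Lemma gmap_emap p : gmap (emap p) = Some p.
Proof.
case: p => l [i j]; rewrite /gmap /emap /= valK; congr Some.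
have -> : inord (jn l (inord (if (j < m l)%N then nat_of_ord j else m' l) : 'I_(m' l).+1)) = j :> 'I_(m l).+1.
  apply: val_inj; rewrite /= inordK; last first.
    by rewrite ltnS jn_le.
  have Hl : (m l <= m' l)%N by apply: Hle; apply: ltnW.
  have Hj : (j <= m l)%N by rewrite -ltnS.
  rewrite inordK; last first.
    case: ifP => // Hj'; rewrite ltnS; exact: leq_trans Hj Hl.
  rewrite /jn; case: (ltnP j (m l)) => Hj'; first by rewrite /= Hj'.
  rewrite /= [(m' l < m l)%N]ltnNge Hl /= eqxx; apply/eqP; by rewrite eqn_leq Hj Hj'.
by [].
Qed.

Lemma tangent_emb th1 :
  tangent (nn_model sigma d L m') (emb th1) = tangent (nn_model sigma d L m) th1.
Proof.
apply: (tangent_transfer (g := gmap) (e := emap)).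
- by rewrite emb_model.
- by move=> q x; rewrite partial_emb.
- exact: gmap_emap.
Qed.

End Net.

Lemma card_nn_param L m : #|nn_param L m| = nn_num_params L m.
Proof.
rewrite card_tagged /nn_num_params sumnE big_map big_enum /=.
apply: eq_bigr => l _; by rewrite card_prod !card_ord mulnC addn1.
Qed.

Unset Implicit Arguments.

Theorem mainTheorem11 (R : realType) (sigma : R -> R) (loss : R -> R -> R)
  (d L : nat) (m m' : nat -> nat)
  (Hsigma : forall x : R, derivable sigma x 1)
  (Hloss : loss_ok loss)
  (HL : (2 <= L)%N)
  (Harch : nn_arch d L m) (Harch' : nn_arch d L m')
  (Hwider : wider L m' m) :
  forall fstar : ('I_d -> R) -> R,
    nn_function_space sigma d L m fstar ->
    exists nw nn : nat,
      [/\ is_optimistic_size (nn_model sigma d L m') loss fstar nw,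
          is_optimistic_size (nn_model sigma d L m) loss fstar nn &
          (nw <= nn <= nn_num_params L m)%N].
Proof.
move=> fstar [th1 Hth1].
case: Hloss => _ _ _ Hge Heq.
case: Harch => _ HmL Hpos.
case: Hwider => Hm0 HmL' Hmid _.
have HL1 : (1 <= L)%N by apply: leq_trans HL.
have Hle : forall l, (l <= L)%N -> (m l <= m' l)%N.
  move=> l Hl; case: (posnP l) => [->|Hl0]; first by rewrite Hm0.
  case: (ltnP l L) => HlL.
    apply: Hmid; rewrite Hl0 /= -ltnS prednK //.
  have -> : l = L by apply/eqP; rewrite eqn_leq Hl HlL.
  by rewrite HmL'.
have [n0 [Hn0 LL]] := LLR_exists Hge Heq Hth1.
have [nn [Lnn Hmin Hnn]] := opt_exists LL.
have Lw : LLR_guarantee (nn_model sigma d L m') loss fstar nn.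
  apply: (LLR_transfer _ Lnn) => th Hth.
  exists (emb th); split.
    by rewrite (emb_model sigma d Hm0 HmL Hle HL1).
  exact: (tangent_emb sigma d Hm0 HmL Hle Hpos HL1).
have [nw [Lnw Hminw Hnw]] := opt_exists Lw.
exists nw, nn; split => //.
by rewrite Hnw /= -card_nn_param (leq_trans Hnn Hn0).
Qed.
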